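(* Let $p$ be a prime with $p\equiv -1\pmod 6$. Then for all integers $\alpha\ge1$ and $n\ge0$, \[ b_{8}\!\left(p^{2\alpha}n+\frac{(24i+7p)p^{2\alpha-1}-7}{24}\right)\equiv 0 \pmod 2 \] for each $i=1,\ldots,p-1$.
   Context: For a positive integer $\ell$, $b_\ell(n)$ denotes the number of partitions of $n$ having no part divisible by $\ell$. *)

(* Defs.v *)
From mathcomp Require Import all_boot.
Set Implicit Arguments. Unset Strict Implicit. Unset Printing Implicit Defensive.

(* A partition of n is encoded by its multiplicity function: f k is the
   number of parts equal to k, for 0 <= k <= n (no part exceeds n and no
   multiplicity exceeds n).  The condition "ell %| k -> f k = 0" forbids parts
   divisible by ell; since ell %| 0, it also forces f 0 = 0 (parts are positive). *)
Definition b (ell n : nat) : nat :=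
  #|[set f : {ffun 'I_n.+1 -> 'I_n.+1} |
      (\sum_(k < n.+1) (k : nat) * (f k : nat) == n)
      && [forall k : 'I_n.+1, (ell %| k) ==> ((f k : nat) == 0)]]|.

(* Main.v *)
Require Import Defs.
From mathcomp Require Import all_boot all_algebra all_field.
From mathcomp Require Import zify ring.
Set Implicit Arguments. Unset Strict Implicit. Unset Printing Implicit Defensive.
Import GRing.Theory.
Local Open Scope ring_scope.
Notation P := {poly 'F_2}.

Section Eqm.
Variable R : comNzRingType.
Implicit Types a b c d : {poly R}.

Definition eqm (M : nat) a b := forall i, (i < M)%N -> a`_i = b`_i.

Lemma eqm_refl M a : eqm M a a. Proof. by []. Qed.
Lemma eqm_sym M a b : eqm M a b -> eqm M b a.
Proof. by move=> h i hi; rewrite h. Qed.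
Lemma eqm_trans M a b c : eqm M a b -> eqm M b c -> eqm M a c.
Proof. by move=> h1 h2 i hi; rewrite h1 // h2. Qed.
Lemma eqm_le M M' a b : (M' <= M)%N -> eqm M a b -> eqm M' a b.
Proof. by move=> hM h i hi; apply: h; apply: leq_trans hM. Qed.

Lemma eqmD M a b c d : eqm M a b -> eqm M c d -> eqm M (a + c) (b + d).
Proof. by move=> h1 h2 i hi; rewrite !coefD h1 // h2. Qed.

Lemma eqmM M a b c d : eqm M a b -> eqm M c d -> eqm M (a * c) (b * d).
Proof.
move=> h1 h2 i hi; rewrite !coefM; apply: eq_bigr => j _.
have hj : (j < M)%N by apply: leq_ltn_trans hi; rewrite -ltnS.
rewrite h1 // h2 //; apply: leq_ltn_trans hi; exact: leq_subr.
Qed.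

Lemma eqm_sum M (I : Type) (r : seq I) (P : pred I) (F G : I -> {poly R}) :
  (forall i, P i -> eqm M (F i) (G i)) ->
  eqm M (\sum_(i <- r | P i) F i) (\sum_(i <- r | P i) G i).
Proof.
move=> h; elim/big_rec2: _ => [|i x y Pi hxy]; first exact: eqm_refl.
exact: eqmD (h _ Pi) hxy.
Qed.

Lemma eqm_prod M (I : Type) (r : seq I) (P : pred I) (F G : I -> {poly R}) :
  (forall i, P i -> eqm M (F i) (G i)) ->
  eqm M (\prod_(i <- r | P i) F i) (\prod_(i <- r | P i) G i).
Proof.
move=> h; elim/big_rec2: _ => [|i x y Pi hxy]; first exact: eqm_refl.
exact: eqmM (h _ Pi) hxy.
Qed.

Lemma eqmXn0 M e a : (M <= e)%N -> eqm M ('X^e * a) 0.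
Proof.
move=> he i hi; rewrite coefXnM coef0.
by have -> : (i < e)%N by apply: leq_trans hi he.
Qed.

Lemma eqmXn1 M e : (M <= e)%N -> eqm M (1 + 'X^e) 1.
Proof.
move=> he; rewrite -[X in eqm _ _ X]addr0; apply: eqmD; first exact: eqm_refl.
rewrite -[_ ^+ e]mulr1; exact: eqmXn0.
Qed.

Lemma eqm_prod_trunc M (f : nat -> {poly R}) (m n : nat) :
  (forall k, (m <= k)%N -> eqm M (f k) 1) -> (m <= n)%N ->
  eqm M (\prod_(k < n) f k) (\prod_(k < m) f k).
Proof.
move=> hf; elim: n => [|n IH]; first by rewrite leqn0 => /eqP->; exact: eqm_refl.
rewrite leq_eqVlt => /orP[/eqP->|]; first exact: eqm_refl.
rewrite ltnS => hmn; rewrite big_ord_recr /= -[X in eqm _ _ X]mulr1.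
exact: eqmM (IH hmn) (hf _ hmn).
Qed.

Lemma eqm_cancel M a b (u : {poly R}) : u`_0 = 1 -> eqm M (a * u) (b * u) -> eqm M a b.
Proof.
move=> u0 h i; elim: i {-2}i (leqnn i) => [|n IH] i hi hM.
  move: hi hM; rewrite leqn0 => /eqP-> hM.
  by have := h 0%N hM; rewrite !coefM !big_ord1 /= u0 !mulr1.
have := h i hM; rewrite !coefM !big_ord_recr /= subnn u0 !mulr1.
have -> : \sum_(j < i) a`_j * u`_(i - j) = \sum_(j < i) b`_j * u`_(i - j).
  apply: eq_bigr => j _; rewrite IH //; last by apply: ltn_trans hM.
  by rewrite -ltnS; apply: leq_trans hi.
by move/addrI.
Qed.
End Eqm.

Section QBin.
Variable R : comNzRingType.
Variable q : R.

Fixpoint qbin (m k : nat) : R :=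
  match m, k with
  | _, 0%N => 1
  | 0%N, _.+1 => 0
  | m'.+1, k'.+1 => qbin m' k' + q ^+ k'.+1 * qbin m' k'.+1
  end.

Lemma qbin_gt m k : (m < k)%N -> qbin m k = 0.
Proof.
elim: m k => [|m IH] [|k] //= hk.
by rewrite !IH ?mulr0 ?addr0 // ltnW.
Qed.

Lemma qbin0 m : qbin m 0 = 1. Proof. by case: m. Qed.

Lemma qbinT m x z :
  \prod_(i < m) (x + z * q ^+ i) =
  \sum_(k < m.+1) qbin m k * q ^+ 'C(k, 2) * z ^+ k * x ^+ (m - k).
Proof.
elim: m z => [|m IH] z; first by rewrite big_ord0 big_ord1 /= !expr0 !mulr1.
rewrite big_ord_recl /= expr0 mulr1.
under eq_bigr => i _ do rewrite /bump /= exprS mulrA.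
rewrite IH mulrDl.
set S := \sum_(k < m.+1) _.
rewrite [in RHS]big_ord_recl /= expr0 !mulr1 subn0 mul1r.
under [in RHS]eq_bigr => i _ do rewrite /bump /= add1n subSS !mulrDl.
rewrite big_split /= addrA [RHS]addrAC; congr (_ + _).
  rewrite /S big_ord_recl /= mulrDr subn0 expr0 !mulr1 qbin0 mul1r -exprS.
  rewrite [in RHS]big_ord_recr /= qbin_gt // mulr0 !mul0r addr0; congr (_ + _).
  rewrite mulr_sumr; apply: eq_bigr => i _.
  rewrite /bump /= add1n add0n.
  have hi : (i < m)%N := ltn_ord i.
  have -> : (m - i = (m - i.+1).+1)%N by rewrite subnSK.
  rewrite [x ^+ (m - i.+1).+1]exprS exprMn; ring.
rewrite /S mulr_sumr; apply: eq_bigr => i _.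
rewrite binS bin1 exprD exprS exprMn; ring.
Qed.

Definition qP (a : nat) : R := \prod_(i < a) (1 - q ^+ i.+1).

Lemma qPS a : qP a.+1 = qP a * (1 - q ^+ a.+1).
Proof. by rewrite /qP big_ord_recr. Qed.

Lemma qP0 : qP 0%N = 1. Proof. by rewrite /qP big_ord0. Qed.

Lemma qbin_prod m k : (k <= m)%N -> qbin m k * qP k * qP (m - k) = qP m.
Proof.
elim: m k => [|m IH] [|k] //.
- by rewrite /= /qP !big_ord0 !mulr1.
- by rewrite qbin0 subn0 /qP big_ord0 !mul1r.
rewrite ltnS leq_eqVlt => /orP[/eqP->|hk].
  rewrite /= (@qbin_gt m m.+1) // mulr0 addr0 subnn qPS.
  have := IH m (leqnn m); rewrite subnn qP0 !mulr1 => e.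
  by rewrite mulrA e.
rewrite /= subSS [qP k.+1]qPS [qP m.+1]qPS.
have e1 := IH k (ltnW hk).
have e2 := IH k.+1 hk.
have hmk : (m - k = (m - k.+1).+1)%N by rewrite subnSK.
rewrite qPS in e2.
have E : (qbin m k + q ^+ k.+1 * qbin m k.+1) * (qP k * (1 - q ^+ k.+1)) * qP (m - k)
  = qbin m k * qP k * qP (m - k) * (1 - q ^+ k.+1) +
    q ^+ k.+1 * (qbin m k.+1 * (qP k * (1 - q ^+ k.+1)) * qP (m - k.+1)) * (1 - q ^+ (m - k)).
  have qmk : qP (m - k) = qP (m - k.+1) * (1 - q ^+ (m - k)) by rewrite {1}hmk qPS -hmk.
  by rewrite qmk; ring.
rewrite E e1 e2.
have -> : q ^+ m.+1 = q ^+ k.+1 * q ^+ (m - k) by rewrite -exprD addSn subnKC // ltnW.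
ring.
Qed.
End QBin.

Lemma prod_split (R : comNzRingType) (c m : nat) (f : nat -> R) :
  \prod_(k < c * m) f k = \prod_(k < m) \prod_(r < c) f (c * k + r)%N.
Proof.
elim: m => [|m IH]; first by rewrite muln0 !big_ord0.
rewrite big_ord_recr /= -IH mulnS addnC -!(big_mkord xpredT).
rewrite (big_cat_nat (leq0n (c * m)) (leq_addr c _)) /=; congr (_ * _).
rewrite -{1}[(c * m)%N]add0n big_addn addKn big_mkord; apply: eq_bigr => i _.
by rewrite addnC.
Qed.

Notation F := 'F_2.

Lemma two0 : (2%:R : P) = 0.
Proof. by rewrite -polyC_natr; apply/eqP; rewrite polyC_eq0. Qed.

Lemma addxx (x : P) : x + x = 0.
Proof. by rewrite -mulr2n -mulr_natl two0 mul0r. Qed.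

Lemma oppP (x : P) : - x = x.
Proof. by apply/eqP; rewrite eq_sym -addr_eq0 addxx. Qed.

Lemma sqrD2 (x y : P) : (x + y) ^+ 2 = x ^+ 2 + y ^+ 2.
Proof. by rewrite sqrrD -mulr_natr two0 mulr0 addr0. Qed.

Definition Ec (c m : nat) : P := \prod_(k < m) (1 + 'X^(c * k.+1)).

Lemma Ec_sq c m : Ec c m ^+ 2 = Ec (2 * c) m.
Proof.
rewrite /Ec -prodrXl; apply: eq_bigr => i _.
by rewrite sqrD2 expr1n -exprM mulnC mulnA.
Qed.

Lemma Ec_trunc M c m m' : (0 < c)%N -> (M <= m.+1)%N -> (m <= m')%N ->
  eqm M (Ec c m') (Ec c m).
Proof.
move=> c0 hM hm; rewrite /Ec; apply: (eqm_prod_trunc (f := fun k => 1 + 'X^(c * k.+1))) => // k hk; apply: eqmXn1.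
nia.
Qed.

Lemma coef0_Ec c m : (0 < c)%N -> (Ec c m)`_0 = 1.
Proof.
move=> c0; rewrite /Ec; elim/big_rec: _ => [|i x _ hx]; first by rewrite coef1.
rewrite coef0M hx mulr1 coefD coef1 coefXn /=.
have -> : (0 == c * i.+1)%N = false by apply/negbTE; rewrite eq_sym muln_eq0 negb_or -lt0n c0.
by rewrite addr0.
Qed.



Lemma C2 a : (2 * 'C(a, 2) + a = a * a)%N.
Proof. elim: a => [|a IH] //; rewrite binS bin1 mulnDr. lia. Qed.
Lemma binD2 a b : ('C(a + b, 2) = 'C(a, 2) + 'C(b, 2) + a * b)%N.
Proof. elim: b => [|b IH]; first by rewrite addn0 bin0n muln0 !addn0.
rewrite addnS binS bin1 IH binS bin1 mulnS. lia. Qed.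

Definition e (c d g n k : nat) : nat :=
  if (n <= k)%N then (c * 'C(k - n, 2) + d * (k - n))%N else (c * 'C(n - k, 2) + g * (n - k))%N.

Lemma earith c d g n k : c = (d + g)%N -> (k <= 2 * n)%N ->
  (c * 'C(k,2) + d * k + c * n * (2 * n - k) = (c * 'C(n,2) + d * n + c * n * n) + e c d g n k)%N.
Proof.
move=> hc hk; rewrite /e; case: ifP => hnk.
  have [j hj] : exists j, k = (n + j)%N by exists (k - n)%N; rewrite subnKC.
  have [r hr] : exists r, n = (j + r)%N by exists (n - j)%N; rewrite subnKC //; lia.
  have -> : (k - n = j)%N by lia.
  have -> : (2 * n - k = r)%N by lia.
  rewrite hj hr [(j + r + j)%N]addnC binD2; ring.
have [t ht] : exists t, n = (k + t)%N by exists (n - k)%N; rewrite subnKC //; lia.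
have -> : (n - k = t)%N by lia.
have -> : (2 * n - k = k + 2 * t)%N by lia.
rewrite ht binD2.
have L : forall X, (c * 'C(k, 2) + d * k + c * (k + t) * (k + 2 * t) + X =
   c * 'C(k, 2) + d * k + c * (k + t) * (k + t) + c * k * t + c * (t * t) + X)%N by move=> X; ring.
apply/eqP; rewrite -(eqn_add2r 0) L addn0 -C2 hc; apply/eqP; ring.
Qed.

Lemma e_ge c d g n k : (0 < d)%N -> (0 < g)%N ->
  ((if (n <= k)%N then k - n else n - k) <= e c d g n k)%N.
Proof.
move=> hd hg; rewrite /e; case: ifP => _.
  by apply: leq_trans (leq_addl _ _); rewrite leq_pmull.
by apply: leq_trans (leq_addl _ _); rewrite leq_pmull.
Qed.

Lemma sum_lin c d n : (\sum_(i < n) (c * i + d) = c * 'C(n, 2) + d * n)%N.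
Proof.
elim: n => [|n IH]; first by rewrite big_ord0 bin0n !muln0.
rewrite big_ord_recr /= IH binS bin1; ring.
Qed.

Lemma JTP2 c d g n : c = (d + g)%N ->
  \prod_(i < n) ((1 + 'X^(c * i + g)) * (1 + 'X^(c * i + d))) =
  \sum_(k < (2 * n).+1) qbin ('X^c : P) (2 * n) k * 'X^(e c d g n k).
Proof.
move=> hc.
set S := (c * 'C(n,2) + d * n + c * n * n)%N.
have XS0 : ('X^S : P) != 0 by rewrite expf_neq0 // polyX_eq0.
apply: (mulfI XS0).
have Q := qbinT ('X^c : P) (2 * n) ('X^(c * n)) ('X^d).
have RHSe : \sum_(k < (2 * n).+1) qbin ('X^c : P) (2 * n) k * ('X^c) ^+ 'C(k, 2) * ('X^d) ^+ k * ('X^(c * n)) ^+ (2 * n - k)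
   = 'X^S * \sum_(k < (2 * n).+1) qbin ('X^c : P) (2 * n) k * 'X^(e c d g n k).
  rewrite mulr_sumr; apply: eq_bigr => k _.
  rewrite -!exprM -mulrA -!exprD -mulrA -exprD mulrCA -exprD.
  have hk : (k <= 2 * n)%N by rewrite -ltnS.
  by rewrite /S -(earith hc hk) addnA.
rewrite -RHSe -Q; clear Q RHSe.
rewrite mul2n -addnn big_split_ord /=.
have h1 : \prod_(i < n) ('X^(c * n) + 'X^d * ('X^c : P) ^+ i) =
    'X^(c * 'C(n,2) + d * n) * \prod_(i < n) (1 + 'X^(c * i + g)).
  transitivity (\prod_(i < n) ('X^(c * i + d) * (1 + ('X^(c * (n - i.+1) + g) : P)))).
    apply: eq_bigr => i _; rewrite mulrDr mulr1 -!exprM -!exprD addrC; congr (_ + _); congr ('X^_); first exact: addnC.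
    have [r hr] : exists r, n = (i + r.+1)%N by exists (n - i.+1)%N; rewrite -addSnnS subnKC.
    have -> : (n - i.+1 = r)%N by lia.
    rewrite {1}hr hc; ring.
  rewrite big_split /= prodrXr sum_lin; congr (_ * _).
  by rewrite [RHS](reindex_inj rev_ord_inj) /=.
have h2 : \prod_(i < n) ('X^(c * n) + 'X^d * ('X^c : P) ^+ (n + i)) =
    'X^(c * n * n) * \prod_(i < n) (1 + 'X^(c * i + d)).
  transitivity (\prod_(i < n) ('X^(c * n) * (1 + ('X^(c * i + d) : P)))).
    apply: eq_bigr => i _; rewrite mulrDr mulr1 -!exprM -!exprD; congr (_ + _); congr ('X^_).
    ring.
  by rewrite big_split /= prodr_const card_ord -exprM.
rewrite h1 h2 /S big_split /= !exprD; ring.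
Qed.

Lemma qP_Ec c a : qP ('X^c : P) a = Ec c a.
Proof. by apply: eq_bigr => i _; rewrite -exprM -[X in 1 - X]oppP opprK. Qed.

Lemma qbin_trunc c M n k : (0 < c)%N -> (M <= k)%N -> (M <= 2 * n - k)%N -> (k <= 2 * n)%N ->
  eqm M (qbin ('X^c : P) (2 * n) k * Ec c n) 1.
Proof.
move=> c0 hk1 hk2 hk.
have hMn : (M <= n)%N by lia.
have T a : (M <= a)%N -> eqm M (Ec c a) (Ec c M) by move=> ha; apply: Ec_trunc.
have hp := qbin_prod ('X^c : P) hk; rewrite !qP_Ec in hp.
have h1 : eqm M (qbin ('X^c : P) (2 * n) k * Ec c M * Ec c M) (1 * Ec c M).
  rewrite mul1r; apply: eqm_trans (T (2 * n)%N _); last by lia.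
  rewrite -hp; apply: eqmM; first apply: eqmM; try exact: eqm_refl.
  - exact: eqm_sym (T _ hk1).
  - exact: eqm_sym (T _ hk2).
have h2 := eqm_cancel (coef0_Ec M c0) h1.
apply: eqm_trans h2; apply: eqmM; first exact: eqm_refl.
exact: T.
Qed.

Lemma JTPtrunc c d g n M : c = (d + g)%N -> (0 < d)%N -> (0 < g)%N -> (2 * M <= n)%N ->
  eqm M (\prod_(i < n) ((1 + 'X^(c * i + g)) * (1 + 'X^(c * i + d))) * Ec c n)
        (\sum_(k < (2 * n).+1) 'X^(e c d g n k)).
Proof.
move=> hc hd hg hn.
have c0 : (0 < c)%N by lia.
rewrite JTP2 // mulr_suml; apply: eqm_sum => k _.
rewrite mulrAC [_ * 'X^_]mulrC.
have hk : (k <= 2 * n)%N by rewrite -ltnS.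
case: (leqP M (e c d g n k)) => he.
  apply: eqm_trans (eqmXn0 _ he) _; apply: eqm_sym.
  by rewrite -[X in eqm _ X _]mulr1; apply: eqmXn0.
rewrite -[X in eqm _ _ X]mulr1; apply: eqmM; first exact: eqm_refl.
have := e_ge c n k hd hg => hge.
apply: qbin_trunc => //; move: hge; case: ifP => hnk h; lia.
Qed.


Lemma prod2 (f : nat -> P) : \prod_(r < 2) f r = f 0%N * f 1%N.
Proof. by rewrite !big_ord_recr big_ord0 /= mul1r. Qed.
Lemma prod3 (f : nat -> P) : \prod_(r < 3) f r = f 0%N * f 1%N * f 2%N.
Proof. by rewrite !big_ord_recr big_ord0 /= mul1r. Qed.
Lemma prod4 (f : nat -> P) : \prod_(r < 4) f r = f 0%N * f 1%N * f 2%N * f 3%N.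
Proof. by rewrite !big_ord_recr big_ord0 /= mul1r. Qed.

Lemma Xeq a b : a = b -> ('X^a : P) = 'X^b. Proof. by move->. Qed.

Lemma pent_prod n :
  \prod_(i < n) ((1 + 'X^(12 * i + 8)) * (1 + 'X^(12 * i + 4))) * Ec 12 n = Ec 4 (3 * n)%N.
Proof.
rewrite /Ec -big_split (@prod_split _ 3 n (fun k => 1 + 'X^(4 * k.+1))); apply: eq_bigr => i _ /=.
rewrite (prod3 (fun r => 1 + 'X^(4 * (3 * i + r).+1))).
rewrite (Xeq (_ : 4 * (3 * i + 0).+1 = 12 * i + 4)%N); last lia.
rewrite (Xeq (_ : 4 * (3 * i + 1).+1 = 12 * i + 8)%N); last lia.
rewrite (Xeq (_ : 4 * (3 * i + 2).+1 = 12 * i.+1)%N); last lia.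
ring.
Qed.

Lemma sqX a : (1 + 'X^(2 * a) : P) = (1 + 'X^a) ^+ 2.
Proof. by rewrite sqrD2 expr1n -exprM mulnC. Qed.

Lemma gauss_prod n :
  Ec 1 (4 * n)%N * Ec 2 (2 * n)%N =
  \prod_(i < n) ((1 + 'X^(4 * i + 1)) * (1 + 'X^(4 * i + 3))) * Ec 4 (2 * n)%N.
Proof.
rewrite /Ec (@prod_split _ 4 n (fun k => 1 + 'X^(1 * k.+1))).
rewrite (@prod_split _ 2 n (fun k => 1 + 'X^(2 * k.+1))).
rewrite (@prod_split _ 2 n (fun k => 1 + 'X^(4 * k.+1))).
rewrite -!big_split; apply: eq_bigr => i _ /=.
rewrite (prod4 (fun r => 1 + 'X^(1 * (4 * i + r).+1))).
rewrite (prod2 (fun r => 1 + 'X^(2 * (2 * i + r).+1))).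
rewrite (prod2 (fun r => 1 + 'X^(4 * (2 * i + r).+1))).
rewrite (Xeq (_ : 1 * (4 * i + 0).+1 = 4 * i + 1)%N); last lia.
rewrite (Xeq (_ : 1 * (4 * i + 1).+1 = 4 * i + 2)%N); last lia.
rewrite (Xeq (_ : 1 * (4 * i + 2).+1 = 4 * i + 3)%N); last lia.
rewrite (Xeq (_ : 1 * (4 * i + 3).+1 = 4 * i + 4)%N); last lia.
rewrite (Xeq (_ : 2 * (2 * i + 0).+1 = 4 * i + 2)%N); last lia.
rewrite (Xeq (_ : 2 * (2 * i + 1).+1 = 4 * i + 4)%N); last lia.
rewrite (Xeq (_ : 4 * (2 * i + 0).+1 = 2 * (4 * i + 2))%N); last lia.
rewrite (Xeq (_ : 4 * (2 * i + 1).+1 = 2 * (4 * i + 4))%N); last lia.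
rewrite !sqX; ring.
Qed.

Lemma eqmX M (a b : P) k : eqm M a b -> eqm M (a ^+ k) (b ^+ k).
Proof.
move=> h; elim: k => [|k IH]; first by rewrite !expr0; exact: eqm_refl.
by rewrite !exprS; apply: eqmM.
Qed.

Lemma cube_trunc M n : (2 * M <= n)%N ->
  eqm M (Ec 1 (4 * n)%N ^+ 3) (\sum_(k < (2 * n).+1) 'X^(e 4 3 1 n k)).
Proof.
move=> hn.
have -> : Ec 1 (4 * n)%N ^+ 3 = Ec 1 (4 * n)%N * Ec 2 (4 * n)%N
  by rewrite -(Ec_sq 1) -exprS.
apply: eqm_trans (_ : eqm M _ (Ec 1 (4 * n)%N * Ec 2 (2 * n)%N)) _.
  apply: eqmM; first exact: eqm_refl.
  apply: Ec_trunc => //; lia.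
rewrite gauss_prod.
apply: eqm_trans (_ : eqm M _ (\prod_(i < n) ((1 + 'X^(4 * i + 1)) * (1 + 'X^(4 * i + 3))) * Ec 4 n)) _.
  apply: eqmM; first exact: eqm_refl.
  apply: Ec_trunc => //; lia.
exact: (@JTPtrunc 4 3 1 n M).
Qed.

Lemma quart_trunc M n : (2 * M <= n)%N ->
  eqm M (Ec 1 (4 * n)%N ^+ 4) (\sum_(k < (2 * n).+1) 'X^(e 12 4 8 n k)).
Proof.
move=> hn.
have -> : Ec 1 (4 * n)%N ^+ 4 = Ec 4 (4 * n)%N
  by rewrite (exprM _ 2 2) Ec_sq Ec_sq.
apply: eqm_trans (_ : eqm M _ (Ec 4 (3 * n)%N)) _.
  apply: Ec_trunc => //; lia.
rewrite -pent_prod.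
exact: (@JTPtrunc 12 4 8 n M).
Qed.


Definition cc (k j : nat) : 'F_2 := if (8 %| k)%N then (j == 0%N)%:R else 1.

Definition G (N : nat) : P :=
  \prod_(k < N.+1) \sum_(j < N.+1) (cc k j)%:P * 'X^(k * j).

Lemma coefG N : (G N)`_N = (b 8 N)%:R.
Proof.
rewrite /G bigA_distr_bigA /= coef_sum.
transitivity (\sum_(f : {ffun 'I_N.+1 -> 'I_N.+1})
   ((\sum_(k < N.+1) (k * f k)%N == N) &&
    [forall k : 'I_N.+1, (8 %| k)%N ==> (f k == 0%N :> nat)])%:R : 'F_2).
  apply: eq_bigr => f _.
  rewrite big_split /= -rmorph_prod prodrXr coefCM coefXn.
  rewrite eq_sym; case: (_ == N); last by rewrite mulr0.
  rewrite mulr1 /=.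
  case: forallP => h.
    rewrite big1 // => k _; rewrite /cc; have := h k; case: (8 %| k)%N => //= /eqP ->.
    by [].
  have [k] : exists k : 'I_N.+1, ~~ ((8 %| k)%N ==> (f k == 0%N :> nat)).
    by apply/existsP; rewrite -negb_forall; apply/forallP.
  rewrite negb_imply => /andP [h8 hk].
  by rewrite (bigD1 k) //= /cc h8 (negbTE hk) mul0r.
rewrite /b cardsE -sumr_const [RHS]big_mkcond /=; apply: eq_bigr => f _.
by rewrite unfold_in; case: (_ && _).
Qed.

Lemma telesc k m : (\sum_(j < m) ('X^(k * j) : P)) * (1 + 'X^k) = 1 + 'X^(k * m).
Proof.
elim: m => [|m IH]; first by rewrite big_ord0 mul0r muln0 expr0 addxx.
rewrite big_ord_recr /= mulrDl IH mulnS addnC exprD mulrDr mulr1.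
by rewrite addrA -[1 + _ + _]addrA addxx addr0.
Qed.

Definition Df (k : nat) : P := if k == 0%N then 1 else 1 + 'X^k.
Definition Hf (k : nat) : P := if (k != 0%N) && (8 %| k)%N then 1 + 'X^k else 1.

Lemma sum_only0 N k : \sum_(j < N.+1) ((j == 0%N :> nat)%:R : 'F_2)%:P * ('X^(k * j) : P) = 1.
Proof.
rewrite big_ord_recl /= muln0 expr0 mulr1 big1 ?addr0 //.
by move=> j _; rewrite /bump /= add1n mul0r.
Qed.

Lemma factor_k N k : (k <= N)%N ->
  eqm N.+1 ((\sum_(j < N.+1) (cc k j)%:P * 'X^(k * j)) * Df k) (Hf k).
Proof.
move=> hk; rewrite /cc /Df /Hf.
case: (eqVneq k 0%N) => [->|k0] /=.
  by rewrite ?dvdn0 /= sum_only0 mulr1; exact: eqm_refl.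
case: ifP => h8.
  by rewrite sum_only0 mul1r; exact: eqm_refl.
under eq_bigr => j _ do rewrite mul1r.
rewrite telesc; apply: eqmXn1.
by rewrite leq_pmull // lt0n.
Qed.

Definition Hn (m : nat) : P := \prod_(k < m) (if (8 %| k.+1)%N then 1 + 'X^(k.+1) else 1).

Lemma prodD N : \prod_(k < N.+1) Df k = Ec 1 N.
Proof.
rewrite big_ord_recl /= /Df /= mul1r /Ec; apply: eq_bigr => i _.
by rewrite /bump /= add1n mul1n.
Qed.

Lemma prodH N : \prod_(k < N.+1) Hf k = Hn N.
Proof.
rewrite big_ord_recl /= /Hf /= mul1r /Hn; apply: eq_bigr => i _.
by rewrite /bump /= add1n.
Qed.

Lemma Hn_trunc N m : (N <= m)%N -> eqm N.+1 (Hn m) (Hn N).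
Proof.
move=> hm; rewrite /Hn.
apply: (eqm_prod_trunc (f := fun k => if (8 %| k.+1)%N then 1 + 'X^(k.+1) else 1)) => // k hk.
case: ifP => _; last exact: eqm_refl.
by apply: eqmXn1.
Qed.

Lemma Hn8 N : Hn (8 * N)%N = Ec 8 N.
Proof.
rewrite /Hn (@prod_split _ 8 N (fun k => if (8 %| k.+1)%N then 1 + 'X^(k.+1) else 1)) /Ec.
apply: eq_bigr => i _ /=.
rewrite big_ord_recr /= big1 ?mul1r.
  have -> : (8 * i + 7).+1 = (8 * i.+1)%N by lia.
  by rewrite dvdn_mulr.
move=> r _; have hr : (r < 7)%N := ltn_ord r.
have -> : (8 * i + r).+1 = (8 * i + r.+1)%N by lia.
rewrite dvdn_addr ?dvdn_mulr //.
by rewrite (gtnNdvd (ltn0Sn _)) //; lia.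
Qed.

Lemma Ec8 N : Ec 8 N = Ec 1 N ^+ 8.
Proof. by rewrite (exprM _ 2 4) (exprM _ 2 2) !Ec_sq. Qed.

Lemma G_E7 N : eqm N.+1 (G N) (Ec 1 N ^+ 7).
Proof.
apply: (@eqm_cancel _ _ _ _ (Ec 1 N)); first exact: coef0_Ec.
rewrite -exprSr -Ec8 -Hn8 /G -prodD -big_split /=.
apply: eqm_trans (_ : eqm _ _ (Hn N)) _; last first.
  by apply: eqm_sym; apply: Hn_trunc; lia.
rewrite -prodH; apply: eqm_prod => k _; apply: factor_k.
by rewrite -ltnS.
Qed.


Lemma e1_sq n k : exists x, (8 * e 4 3 1 n k + 1 = x * x)%N.
Proof.
rewrite /e; case: ifP => _.
  set j := (k - n)%N; exists (4 * j + 1)%N.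
  have h := C2 j.
  have -> : (8 * (4 * 'C(j, 2) + 3 * j) + 1 = 16 * (2 * 'C(j, 2) + j) + 8 * j + 1)%N by ring.
  rewrite h; ring.
set t := (n - k)%N; case: t => [|s]; first by exists 1%N.
exists (4 * s + 3)%N.
have h := C2 s.+1.
have -> : (8 * (4 * 'C(s.+1, 2) + 1 * s.+1) + 1 = 16 * (2 * 'C(s.+1, 2) + s.+1) - 8 * s.+1 + 1)%N.
  by rewrite mulnDr; lia.
rewrite h; lia.
Qed.

Lemma e2_sq n k : exists y, (6 * e 12 4 8 n k + 1 = y * y)%N.
Proof.
rewrite /e; case: ifP => _.
  set j := (k - n)%N; case: j => [|s]; first by exists 1%N.
  exists (6 * s + 5)%N.
  have h := C2 s.+1.
  have -> : (6 * (12 * 'C(s.+1, 2) + 4 * s.+1) + 1 = 36 * (2 * 'C(s.+1, 2) + s.+1) - 12 * s.+1 + 1)%N.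
    by rewrite mulnDr; lia.
  rewrite h; lia.
set t := (n - k)%N; exists (6 * t + 1)%N.
have h := C2 t.
have -> : (6 * (12 * 'C(t, 2) + 8 * t) + 1 = 36 * (2 * 'C(t, 2) + t) + 12 * t + 1)%N by ring.
rewrite h; ring.
Qed.

Lemma coef_final N : (forall x y : nat, (3 * (x * x) + 4 * (y * y) != 24 * N + 7)%N) -> (2 %| b 8 N)%N.
Proof.
move=> hrep.
set M := N.+1; set n := (2 * M)%N.
have hn : (2 * M <= n)%N by [].
have h1 := @G_E7 N.
have h2 : eqm M (Ec 1 N ^+ 7) (Ec 1 (4 * n)%N ^+ 7).
  apply: eqmX; apply: eqm_sym; apply: Ec_trunc => //; lia.
have h3 : eqm M (Ec 1 (4 * n)%N ^+ 7)
   ((\sum_(k < (2 * n).+1) 'X^(e 4 3 1 n k)) * (\sum_(k < (2 * n).+1) 'X^(e 12 4 8 n k))).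
  rewrite (_ : 7 = 3 + 4)%N // exprD; apply: eqmM; [exact: cube_trunc | exact: quart_trunc].
have := eqm_trans h1 (eqm_trans h2 h3) (ltnSn N).
rewrite coefG mulr_suml coef_sum big1.
  by move/eqP; rewrite -(dvdn_pcharf (pchar_Fp (isT : prime 2))).
move=> k _; rewrite mulr_sumr coef_sum big1 // => k' _.
rewrite -exprD coefXn.
have [x hx] := e1_sq n k; have [y hy] := e2_sq n k'.
case: eqP => // hN; exfalso; move: (hrep x y); rewrite -hx -hy hN.
by move/eqP; apply; ring.
Qed.


Lemma KL p x y : prime p -> (p %% 6 = 5)%N -> (p %| 3 * (x * x) + 4 * (y * y))%N ->
  (p %| x)%N /\ (p %| y)%N.
Proof.
move=> hp hp6 hd.
have hc := pchar_Fp hp.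
have D n : (p %| n)%N = (n%:R == 0 :> 'F_p) by rewrite (dvdn_pcharf hc).
have p5 : (5 <= p)%N by have := prime_gt1 hp; lia.
have n2 : (2%:R : 'F_p) != 0 by rewrite -D; apply/negP => /dvdn_leq; lia.
have n3 : (3%:R : 'F_p) != 0 by rewrite -D; apply/negP => /dvdn_leq; lia.
set X : 'F_p := x%:R; set Y : 'F_p := y%:R.
have h0 : 3%:R * (X * X) + 4%:R * (Y * Y) = 0.
  by apply/eqP; rewrite /X /Y -!natrM -natrD -D.
suff hy : (p %| y)%N.
  split => //; move: hy; rewrite !D -/X -/Y => /eqP hY.
  move: h0; rewrite hY mulr0 mulr0 addr0 => /eqP; rewrite mulf_eq0 (negbTE n3) /=.
  by rewrite mulf_eq0 orbb.
rewrite D -/Y; apply/negPn/negP => hY.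
set u := 3%:R * X / (2%:R * Y).
have hu : u * u = - 3%:R.
  have h2Y : 2%:R * Y != 0 by rewrite mulf_neq0.
  apply: (mulIf (mulf_neq0 h2Y h2Y)).
  have -> : u * u * (2%:R * Y * (2%:R * Y)) = (u * (2%:R * Y)) * (u * (2%:R * Y)) by ring.
  rewrite /u divfK //.
  have -> : 3%:R * X * (3%:R * X) = 3%:R * (3%:R * (X * X)) by ring.
  have -> : 3%:R * (X * X) = - (4%:R * (Y * Y)) by apply/eqP; rewrite -addr_eq0 h0.
  ring.
set w := (u - 1) / 2%:R.
have hw : w * w + w + 1 = 0.
  apply: (mulIf (mulf_neq0 n2 n2)); rewrite mul0r.
  have -> : (w * w + w + 1) * (2%:R * 2%:R) = (w * 2%:R) * (w * 2%:R) + (w * 2%:R) * 2%:R + 4%:R by ring.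
  rewrite /w divfK //.
  have -> : (u - 1) * (u - 1) + (u - 1) * 2%:R + 4%:R = u * u + 3%:R by ring.
  by rewrite hu addNr.
have w3 : w ^+ 3 = 1.
  apply/eqP; rewrite -subr_eq0.
  have -> : w ^+ 3 - 1 = (w - 1) * (w * w + w + 1) by ring.
  by rewrite hw mulr0.
have wp : w ^+ p = w by have := expf_card w; rewrite card_Fp.
have [q hq] : exists q, p = (6 * q + 5)%N by exists (p %/ 6)%N; rewrite {1}(divn_eq p 6) hp6 mulnC.
have w2 : w ^+ 2 = w.
  have ep : (3 * (2 * q + 1) + 2)%N = p by rewrite hq; ring.
  have wp2 : w ^+ (3 * (2 * q + 1) + 2) = w by rewrite ep.
  by move: wp2; rewrite exprD exprM w3 expr1n mul1r.
have : w * (w - 1) = 0 by rewrite mulrBr mulr1 -expr2 w2 subrr.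
move/eqP; rewrite mulf_eq0 => /orP [/eqP w0|].
  by move: hw; rewrite w0 mul0r !add0r => /eqP; rewrite oner_eq0.
rewrite subr_eq0 => /eqP w1.
move: hw; rewrite w1 mul1r => /eqP.
have -> : (1 + 1 + 1 : 'F_p) = 3%:R by ring.
by rewrite (negbTE n3).
Qed.


Local Close Scope ring_scope.

Lemma descent p R : prime p -> p %% 6 = 5 -> ~~ (p %| R) ->
  forall a x y, 3 * (x * x) + 4 * (y * y) != p ^ (2 * a + 1) * R.
Proof.
move=> hp hp6 hR; elim=> [|a IH] x y; apply/eqP => h.
  have hd : p %| 3 * (x * x) + 4 * (y * y) by rewrite h muln0 add0n expn1 dvdn_mulr.
  have [/dvdnP [x' hx] /dvdnP [y' hy]] := KL hp hp6 hd; subst x y.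
  move: h; rewrite muln0 add0n expn1.
  have -> : 3 * (x' * p * (x' * p)) + 4 * (y' * p * (y' * p)) = p * (p * (3 * (x' * x') + 4 * (y' * y'))) by ring.
  move/eqP; rewrite eqn_pmul2l ?prime_gt0 // => /eqP hh.
  by move: hR; rewrite -hh dvdn_mulr.
have hd : p %| 3 * (x * x) + 4 * (y * y) by rewrite h addnS expnS -mulnA dvdn_mulr.
have [/dvdnP [x' hx] /dvdnP [y' hy]] := KL hp hp6 hd; subst x y.
move: h.
have -> : 3 * (x' * p * (x' * p)) + 4 * (y' * p * (y' * p)) = p * (p * (3 * (x' * x') + 4 * (y' * y'))) by ring.
have -> : p ^ (2 * a.+1 + 1) * R = p * (p * (p ^ (2 * a + 1) * R)).
  by rewrite (_ : 2 * a.+1 + 1 = (2 * a + 1).+2); [rewrite !expnS; ring | lia].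
move/eqP; rewrite !eqn_pmul2l ?prime_gt0 // => /eqP hh.
by move: (IH x' y'); rewrite hh eqxx.
Qed.

Theorem theorem3p22 (p : nat) (hp : prime p) (hp6 : p %% 6 = 5)
  (alpha n i : nat) (halpha : 1 <= alpha) (hi1 : 1 <= i) (hi2 : i <= p - 1) :
  b 8 (p ^ (2 * alpha) * n
       + ((24 * i + 7 * p) * p ^ (2 * alpha - 1) - 7) %/ 24) = 0 %[mod 2].
Proof.
set q := p ^ (2 * alpha - 1).
have p5 : 5 <= p by have := prime_gt1 hp; lia.
have pq : p * q = p ^ (2 * alpha) by rewrite /q -expnS; congr (p ^ _); lia.
have [s hs] : exists s, p = 6 * s + 5 by exists (p %/ 6); rewrite {1}(divn_eq p 6) hp6 mulnC.
have [T hT] : exists T, p ^ (2 * alpha) = 24 * T + 1.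
  have h2 : p ^ 2 %% 24 = 1.
    have hc := C2 s.+1.
    have -> : p ^ 2 = (s * s + 2 * s + 1 + 'C(s.+1, 2)) * 24 + 1.
      rewrite hs; apply/eqP; rewrite -(eqn_add2r (12 * (s.+1))).
      have -> : (s * s + 2 * s + 1 + 'C(s.+1, 2)) * 24 + 1 + 12 * s.+1 =
                (s * s + 2 * s + 1) * 24 + 12 * (2 * 'C(s.+1, 2) + s.+1) + 1 by ring.
      rewrite hc; apply/eqP; ring.
    by rewrite modnMDl.
  exists (p ^ (2 * alpha) %/ 24); rewrite {1}(divn_eq (p ^ (2 * alpha)) 24) mulnC; congr (_ + _).
  by rewrite expnM -modnXm h2 exp1n.
have hdiv : (24 * i + 7 * p) * q - 7 = 24 * (i * q + 7 * T).
  have -> : (24 * i + 7 * p) * q = 24 * (i * q) + 7 * (p * q) by ring.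
  rewrite pq hT; lia.
rewrite hdiv mulKn //.
set N := p ^ (2 * alpha) * n + (i * q + 7 * T).
have key : 24 * N + 7 = p ^ (2 * (alpha - 1) + 1) * (24 * p * n + 24 * i + 7 * p).
  have -> : 2 * (alpha - 1) + 1 = 2 * alpha - 1 by lia.
  rewrite -/q /N -pq.
  have -> : 24 * (p * q * n + (i * q + 7 * T)) + 7 = 24 * (p * q * n + i * q) + 7 * (24 * T + 1) by ring.
  rewrite -hT -pq; ring.
have hR : ~~ (p %| 24 * p * n + 24 * i + 7 * p).
  apply/negP => h.
  have h' : p %| 24 * i.
    move: h; have -> : 24 * p * n + 24 * i + 7 * p = 24 * i + p * (24 * n + 7) by ring.
    by rewrite dvdn_addl // dvdn_mulr.
  move: h'; rewrite Euclid_dvdM // => /orP [h24|hpi].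
    move: h24; rewrite (_ : 24 = 2 ^ 3 * 3) // Euclid_dvdM // => /orP [h8|h3].
      by move: h8; rewrite Euclid_dvdX // => /andP [/(dvdn_leq (isT : 0 < 2)) h2 _]; lia.
    by move: h3 => /(dvdn_leq (isT : 0 < 3)); lia.
  by move: hpi => /(dvdn_leq hi1); lia.
have hall : forall x y, 3 * (x * x) + 4 * (y * y) != 24 * N + 7.
  by move=> x y; rewrite key; apply: descent.
have := coef_final hall.
by rewrite /dvdn => /eqP ->.
Qed.
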